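(* Let $\lambda\in P$, $\lhd\in\mathrm{RO}(\lambda,\Delta^+)$ and $w\in W$. For every $A\in\mathcal{A}(w,\Gamma)$, $$n(A)\equiv\mathrm{nega}(\Xi(A))+\ell(\mathrm{end}(A))-\ell(\iota(\Xi(A)))\pmod 2.$$
   Context: Let $\mathfrak{g}$ be a finite-dimensional complex simple Lie algebra with root system $\Delta$, positive roots $\Delta^+$, Weyl group $W$ with length function $\ell$ and reflections $s_\alpha$, weight lattice $P$, pairing $\langle\cdot,\cdot\rangle$, $\alpha^\vee$ the coroot of $\alpha$, $\rho=\frac12\sum_{\alpha\in\Delta^+}\alpha$. For $\alpha\in\Delta$, $\operatorname{sgn}(\alpha)=\pm1$ according as $\alpha\in\pm\Delta^+$, and $|\alpha|=\operatorname{sgn}(\alpha)\alpha$. For $\lambda\in P$, $\Delta^+(\lambda)_{>0}$, $\Delta^+(\lambda)_{=0}$, $\Delta^+(\lambda)_{<0}$ are the sets of $\alpha\in\Delta^+$ with $\langle\lambda,\alpha^\vee\rangle>0$, $=0$, $<0$. Quantum Bruhat graph $\mathrm{QBG}(W)$: vertices $W$; an edge $x\xrightarrow{\alpha}y$ ($\alpha\in\Delta^+$) whenever $y=xs_\alpha$ and either $\ell(y)=\ell(x)+1$ (Bruhat edge) or $\ell(y)=\ell(x)-2\langle\rho,\alpha^\vee\rangle+1$ (quantum edge). For $v,u\in W$, $\ell(v\Rightarrow u)$ denotes the length of a shortest directed path from $v$ to $u$ in $\mathrm{QBG}(W)$. Reflection orders: a total order $\lhd$ on $\Delta^+$ is a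 reflection order if whenever $\alpha,\beta,\alpha+\beta\in\Delta^+$, either $\alpha\lhd\alpha+\beta\lhd\beta$ or $\beta\lhd\alpha+\beta\lhd\alpha$; $\mathrm{RO}(\lambda,\Delta^+)$ is the set of those with $\alpha\lhd\beta\lhd\gamma$ for $\alpha\in\Delta^+(\lambda)_{<0}$, $\beta\in\Delta^+(\lambda)_{=0}$, $\gamma\in\Delta^+(\lambda)_{>0}$. Fix such $\lhd$. Interpolated QLS paths: for $x,y\in W$, $\sigma\in\mathbb{Q}$, write $x\overset{(\lambda,+)}{\Longrightarrow}_\sigma y$ if there is a directed path $x=x_0\xrightarrow{\gamma_1}x_1\to\cdots\xrightarrow{\gamma_r}x_r=y$ in $\mathrm{QBG}(W)$ ($r\ge0$) with all $\gamma_k\in\Delta^+(\lambda)_{>0}$, $\gamma_{k+1}\lhd\gamma_k$ for all $k$, and $\sigma\langle\lambda,\gamma_k^\vee\rangle\in\mathbb{Z}$ for all $k$; $x\overset{(\lambda,-)}{\Longrightarrow}_\sigma y$ is defined identically with $\Delta^+(\lambda)_{<0}$ in place of $\Delta^+(\lambda)_{>0}$. An interpolated QLS path of shape $\lambda$ is a triple $\eta=(x_1,\dots,x_s;y_1,\dots,y_{s-1};\sigma_0,\dots,\sigma_s)$ ($s\ge1$) with $x_i,y_i\in W$, $x_i\ne x_{i+1}$, $y_i\ne y_{i+1}$, $\sigma_i\in\mathbb{Q}$, $0=\sigma_0<\sigma_1<\dots<\sigma_s=1$, and for $1\le i\le s-1$: $x_{i+1}\overset{(\lambda,-)}{\Longrightarrow}_{\sigma_i}y_i$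 and $y_i\overset{(\lambda,+)}{\Longrightarrow}_{\sigma_i}x_i$. $\mathrm{IQLS}(\lambda)$ is the set of these; $\iota(\eta):=x_1$; $\mathrm{nega}(\eta):=\sum_{k=1}^{s-1}\ell(x_{k+1}\Rightarrow y_k)$. Affine data: real affine coroots $\gamma^\vee+k\tilde\delta$ ($\gamma\in\Delta$, $k\in\mathbb{Z}$, $\tilde\delta$ formal); for $\beta^\vee=\gamma^\vee+k\tilde\delta$ put $\overline{\beta^\vee}=\gamma^\vee$, $\overline\beta=\gamma$, $\deg(\beta^\vee)=k$; it is positive if $k>0$ or ($k=0$, $\gamma\in\Delta^+$), negative otherwise; $t_\lambda(\gamma^\vee+k\tilde\delta)=\gamma^\vee+(k-\langle\lambda,\gamma^\vee\rangle)\tilde\delta$; $\mathrm{Inv}(\lambda)$ is the set of positive real affine coroots $\beta^\vee$ with $t_\lambda(\beta^\vee)$ negative (for these, $\langle\lambda,\overline{\beta^\vee}\rangle>0$ and $\overline\beta\in\Delta^+(\lambda)_{>0}\sqcup(-\Delta^+(\lambda)_{<0})$); put $d(\beta^\vee)=\deg(\beta^\vee)/\langle\lambda,\overline{\beta^\vee}\rangle$. Order $\prec$ on $\Delta^+(\lambda)_{>0}\sqcup(-\Delta^+(\lambda)_{<0})$: elements of $\Delta^+(\lambda)_{>0}$ precede those of $-\Delta^+(\lambda)_{<0}$; $\gamma\prec\gamma'$ iff $\gamma\lhd\gamma'$ on $\Delta^+(\lambda)_{>0}$; $-\alpha\prec-\alpha'$ iff $\alpha\lhd\alpha'$ on $-\Delta^+(\lambda)_{<0}$.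 Order $<$ on $\mathrm{Inv}(\lambda)$: $\beta^\vee<\beta'^\vee$ iff $d(\beta^\vee)<d(\beta'^\vee)$, or they are equal and $\overline{\beta'}\prec\overline\beta$. Write $\mathrm{Inv}(\lambda)=\{\beta_1^\vee<\dots<\beta_r^\vee\}$, $\gamma_k:=\overline{\beta_k}$, $d_k:=d(\beta_k^\vee)$, and $\Gamma:=(\gamma_1,\dots,\gamma_r)$. Admissible subsets: for $w\in W$, $\mathcal{A}(w,\Gamma)$ is the set of $A=\{j_1<\dots<j_p\}\subseteq\{1,\dots,r\}$ such that $w=u_0\xrightarrow{|\gamma_{j_1}|}u_1\to\cdots\xrightarrow{|\gamma_{j_p}|}u_p$ is a directed path in $\mathrm{QBG}(W)$, where $u_a:=ws_{|\gamma_{j_1}|}\cdots s_{|\gamma_{j_a}|}$; $\mathrm{end}(A):=u_p$; $n(A):=\#\{j\in A\mid\gamma_j\in-\Delta^+\}$. One has $0\le d_{j_1}\le\dots\le d_{j_p}\le1$. The map $\Xi$: let $0<c_1<\dots<c_{t-1}<1$ ($t\ge1$) be the distinct values among $d_{j_1},\dots,d_{j_p}$ lying strictly between $0$ and $1$; put $c_0:=0$, $c_t:=1$. For $1\le a\le t$ let $m_a:=\#\{b\mid d_{j_b}<c_a\}$; for $1\le a\le t-1$ let $n_a:=m_a+\#\{b\mid m_a<b\le m_{a+1},\ \gamma_{j_b}\in-\Delta^+\}$. Then $\Xi(A):=(x_1,\dots,x_t;y_1,\dots,y_{t-1};\sigma_0,\dots,\sigma_t)$ with $x_i:=u_{m_{t+1-i}}$,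 $y_i:=u_{n_{t-i}}$, $\sigma_i:=1-c_{t-i}$; this lies in $\mathrm{IQLS}(\lambda)$. *)

(* Defs.v *)
From HB Require Import structures.
From mathcomp Require Import all_boot all_order all_algebra.
From mathcomp Require Import reals.
From Stdlib Require Import ClassicalEpsilon.

Set Implicit Arguments.
Unset Strict Implicit.
Unset Printing Implicit Defensive.

Import Order.TTheory GRing.Theory Num.Theory.
Local Open Scope ring_scope.

Section Euclid.
Variables (R : realType) (n : nat).

Definition dot (a b : 'cV[R]_n) : R := \sum_(i < n) a i ord0 * b i ord0.

Definition pair (l a : 'cV[R]_n) : R := 2 * dot l a / dot a a.

(* the reflection s_a : x |-> x - <x,a^vee> a, as a matrix acting on the left *)
Definition refl (a : 'cV[R]_n) : 'M[R]_n :=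
  1%:M - (2 / dot a a) *: (a *m a^T).

Definition is_int (x : R) : Prop := exists z : int, x = z%:~R.

End Euclid.

Record rootSystem (R : realType) (n : nat) := RootSystem {
  rs_roots : seq 'cV[R]_n;
  roots_uniq : uniq rs_roots;
  roots_nonempty : rs_roots != [::];
  roots_nz : 0 \notin rs_roots;
  roots_span : forall x : 'cV[R]_n,
      exists c : nat -> R, x = \sum_(i < size rs_roots) c i *: rs_roots`_i;
  roots_refl : forall a b, a \in rs_roots -> b \in rs_roots -> refl a *m b \in rs_roots;
  roots_cryst : forall a b, a \in rs_roots -> b \in rs_roots -> is_int (pair b a);
  roots_reduced : forall a (c : R), a \in rs_roots -> c *: a \in rs_roots ->
      c = 1 \/ c = -1;
  roots_irred : forall P : pred 'cV[R]_n,
      (forall a b, a \in rs_roots -> b \in rs_roots -> P a -> ~~ P b -> dot a b = 0) ->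
      all P rs_roots \/ all (predC P) rs_roots
}.

Inductive inW (R : realType) (n : nat) (rs : rootSystem R n) : 'M[R]_n -> Prop :=
  | inW1 : inW rs 1%:M
  | inWs : forall x a, inW rs x -> a \in rs_roots rs -> inW rs (x *m refl a).

Section RootData.
Variables (R : realType) (n : nat) (rs : rootSystem R n).
(* v : a regular vector; Delta^+ = {a in Delta | (a, v) > 0} *)
Variable v : 'cV[R]_n.

Local Notation Delta := (rs_roots rs).

Definition is_pos (a : 'cV[R]_n) : bool := 0 < dot a v.
Definition posroots : seq 'cV[R]_n := [seq a <- Delta | is_pos a].
Definition sgnabs (a : 'cV[R]_n) : 'cV[R]_n := if is_pos a then a else - a.
Definition rho : 'cV[R]_n := 2^-1 *: \sum_(a <- posroots) a.

Definition len (x : 'M[R]_n) : nat :=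
  count (fun a => dot (x *m a) v < 0) posroots.

Definition qbg_edge (x : 'M[R]_n) (a : 'cV[R]_n) (y : 'M[R]_n) : bool :=
  [&& a \in posroots, y == x *m refl a &
      (len y == (len x).+1)%N ||
      ((len y)%:R == (len x)%:R - 2 * pair rho a + 1 :> R)].

Fixpoint qbg_walk (x : 'M[R]_n) (gs : seq 'cV[R]_n) : bool :=
  if gs is g :: gs' then qbg_edge x g (x *m refl g) && qbg_walk (x *m refl g) gs'
  else true.

Definition walk_end (x : 'M[R]_n) (gs : seq 'cV[R]_n) : 'M[R]_n :=
  foldl (fun u g => u *m refl g) x gs.

Fixpoint seqs_len (k : nat) : seq (seq 'cV[R]_n) :=
  if k is k'.+1 then [seq a :: t | a <- posroots, t <- seqs_len k'] else [:: [::]].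

Definition reach_len (x y : 'M[R]_n) (k : nat) : bool :=
  has (fun gs => qbg_walk x gs && (walk_end x gs == y)) (seqs_len k).

(* l(x => y): length of a shortest directed path from x to y (0 if none) *)
Definition qbg_dist (x y : 'M[R]_n) : nat :=
  match excluded_middle_informative (exists k, reach_len x y k) with
  | left H => @ex_minn (reach_len x y) H
  | right _ => 0%N
  end.

Definition is_weight (lam : 'cV[R]_n) : Prop :=
  forall a, a \in Delta -> is_int (pair lam a).

(* a total order on Delta^+ is given by a listing [ord] of Delta^+ *)
Variable ord : seq 'cV[R]_n.
Definition rlt (a b : 'cV[R]_n) : bool := (index a ord < index b ord)%N.

Definition reflection_order : Prop :=
  [/\ uniq ord, perm_eq ord posroots &
      forall a b, a \in posroots -> b \in posroots -> a + b \in posroots ->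
        (rlt a (a + b) && rlt (a + b) b) || (rlt b (a + b) && rlt (a + b) a)].

Variable lam : 'cV[R]_n.

Definition RO_lambda : Prop :=
  reflection_order /\
  forall a b, a \in posroots -> b \in posroots ->
    [/\ pair lam a < 0 -> pair lam b = 0 -> rlt a b,
        pair lam a = 0 -> pair lam b > 0 -> rlt a b &
        pair lam a < 0 -> pair lam b > 0 -> rlt a b].

(* A real affine coroot g^vee + k delta~ is encoded by the pair (g, k). *)
Definition aff_pos (b : 'cV[R]_n * int) : bool :=
  (0 < b.2) || ((b.2 == 0) && is_pos b.1).
(* t_lam(g^vee + k delta~) = g^vee + (k - <lam,g^vee>) delta~ is negative *)
Definition tlam_neg (b : 'cV[R]_n * int) : bool :=
  let e := b.2%:~R - pair lam b.1 in (e < 0) || ((e == 0) && ~~ is_pos b.1).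
Definition in_Inv (b : 'cV[R]_n * int) : bool := aff_pos b && tlam_neg b.

(* a finite range of degrees containing those of all elements of Inv(lam):
   such elements satisfy 0 <= k <= <lam, g^vee> *)
Definition deg_bound : nat := `|Num.floor (\sum_(a <- Delta) `|pair lam a|)|%N.
Definition Inv_cands : seq ('cV[R]_n * int) :=
  [seq (a, Posz k) | a <- Delta, k <- iota 0 deg_bound.+1].

Definition dval (b : 'cV[R]_n * int) : R := b.2%:~R / pair lam b.1.

(* key for the order \prec on Delta^+(lam)_{>0} \sqcup (-Delta^+(lam)_{<0}) *)
Definition prec_key (g : 'cV[R]_n) : nat :=
  if is_pos g then index g ord else (size ord + index (- g) ord)%N.

(* b <= b' for the order < on Inv(lam) (reflexive closure) *)
Definition Inv_le (b b' : 'cV[R]_n * int) : bool :=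
  (dval b < dval b') ||
  ((dval b == dval b') && (prec_key b'.1 <= prec_key b.1)%N).

Definition Inv_list : seq ('cV[R]_n * int) :=
  sort Inv_le [seq b <- Inv_cands | in_Inv b].

Definition r_len : nat := size Inv_list.
Definition beta (j : nat) : 'cV[R]_n * int := nth (0, 0) Inv_list j.
Definition gam (j : nat) : 'cV[R]_n := (beta j).1.   (* gamma_{j+1} *)
Definition dd (j : nat) : R := dval (beta j).        (* d_{j+1} *)

(* A subset {j_1 < ... < j_p} of {1,...,r} is encoded (0-based) as the
   strictly increasing list [j_1 - 1; ...; j_p - 1]. *)
Variable w : 'M[R]_n.

Definition us (A : seq nat) : seq 'M[R]_n :=
  w :: scanl (fun u j => u *m refl (sgnabs (gam j))) w A.
Definition u (A : seq nat) (a : nat) : 'M[R]_n := nth w (us A) a.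

Fixpoint adm_walk (x : 'M[R]_n) (A : seq nat) : bool :=
  if A is j :: A' then
    let y := x *m refl (sgnabs (gam j)) in qbg_edge x (sgnabs (gam j)) y && adm_walk y A'
  else true.

Definition admissible (A : seq nat) : bool :=
  [&& sorted ltn A, all (fun j => j < r_len)%N A & adm_walk w A].

Definition end_A (A : seq nat) : 'M[R]_n := last w (us A).
Definition n_A (A : seq nat) : nat := count (fun j => ~~ is_pos (gam j)) A.

(* interpolated QLS triples (x_1..x_s ; y_1..y_{s-1} ; sigma_0..sigma_s) *)
Record triple := Triple { xs : seq 'M[R]_n; ys : seq 'M[R]_n; sigmas : seq R }.

Definition iota_eta (eta : triple) : 'M[R]_n := nth 0 (xs eta) 0.
Definition nega (eta : triple) : nat :=
  (\sum_(1 <= k < size (xs eta)) qbg_dist (nth 0%R (xs eta) k) (nth 0%R (ys eta) k.-1))%N.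

Section Xi.
Variable A : seq nat.
Definition ds : seq R := [seq dd j | j <- A].
Definition cs : seq R := sort <=%R (undup [seq d <- ds | (0 < d) && (d < 1)]).
Definition t_A : nat := (size cs).+1.
Definition cc (a : nat) : R :=
  if a == 0%N then 0 else if (a < t_A)%N then nth 0 cs a.-1 else 1.
Definition mm (a : nat) : nat := count (fun d => d < cc a) ds.
Definition negflags : seq bool := [seq ~~ is_pos (gam j) | j <- A].
Definition nn (a : nat) : nat :=
  (mm a + count id (take (mm a.+1 - mm a) (drop (mm a) negflags)))%N.
Definition Xi : triple :=
  Triple [seq u A (mm (t_A.+1 - i)) | i <- iota 1 t_A]
         [seq u A (nn (t_A - i)) | i <- iota 1 t_A.-1]
         [seq 1 - cc (t_A - i) | i <- iota 0 t_A.+1].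
End Xi.

End RootData.

(* Main.v *)
Require Import Defs.
From HB Require Import structures.
From mathcomp Require Import all_boot all_order all_algebra.
From mathcomp Require Import reals zify ring.
From Stdlib Require Import ClassicalEpsilon.
Set Implicit Arguments. Unset Strict Implicit. Unset Printing Implicit Defensive.
Import Order.TTheory GRing.Theory Num.Theory.
Local Open Scope ring_scope.

Section Dot.
Variables (R : realType) (n : nat).
Implicit Types a b c : 'cV[R]_n.

Lemma dotC a b : dot a b = dot b a.
Proof. by apply: eq_bigr => i _; rewrite mulrC. Qed.
Lemma dotDl a b c : dot (a + b) c = dot a c + dot b c.
Proof. by rewrite /dot -big_split; apply: eq_bigr => i _; rewrite mxE mulrDl. Qed.
Lemma dotZl k a c : dot (k *: a) c = k * dot a c.
Proof. by rewrite /dot mulr_sumr; apply: eq_bigr => i _; rewrite mxE mulrA. Qed.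
Lemma dotNl a c : dot (- a) c = - dot a c.
Proof. by rewrite -scaleN1r dotZl mulN1r. Qed.
Lemma dot0l c : dot 0 c = 0.
Proof. by rewrite -(scale0r (0 : 'cV[R]_n)) dotZl mul0r. Qed.
Lemma dot_sum (T : Type) (s : seq T) (F : T -> 'cV[R]_n) c :
  dot (\sum_(x <- s) F x) c = \sum_(x <- s) dot (F x) c.
Proof.
elim: s => [|x s IH]; first by rewrite !big_nil dot0l.
by rewrite !big_cons dotDl IH.
Qed.
Lemma dot_eq0 a : dot a a = 0 -> a = 0.
Proof.
move=> H; apply/matrixP => i j; rewrite (ord1 j) mxE.
have := psumr_eq0P (P := predT) (F := fun k : 'I_n => a k ord0 * a k ord0).
move/(_ (fun k _ => sqr_ge0 (a k ord0)) H i isT)/eqP.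
by rewrite mulf_eq0 orbb => /eqP.
Qed.

Lemma pairDl a b c : pair (a + b) c = pair a c + pair b c.
Proof. by rewrite /pair dotDl mulrDr mulrDl. Qed.
Lemma pairZl k a c : pair (k *: a) c = k * pair a c.
Proof. by rewrite /pair dotZl mulrCA !mulrA. Qed.
Lemma pairNl a c : pair (- a) c = - pair a c.
Proof. by rewrite -scaleN1r pairZl mulN1r. Qed.
Lemma pair_sum (T : Type) (s : seq T) (F : T -> 'cV[R]_n) c :
  pair (\sum_(x <- s) F x) c = \sum_(x <- s) pair (F x) c.
Proof. by rewrite /pair dot_sum mulr_sumr mulr_suml. Qed.
Lemma pairaa a : a != 0 -> pair a a = 2.
Proof.
move=> a0; rewrite /pair mulfK //; apply/eqP => /dot_eq0 /eqP; exact/negP.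
Qed.
Lemma refl_mul a b : refl a *m b = b - pair b a *: a.
Proof.
rewrite /refl mulmxBl mul1mx -scalemxAl -mulmxA.
have -> : a^T *m b = (dot a b)%:M.
  apply/matrixP => i j; rewrite !ord1 !mxE eqxx mulr1n /dot.
  by apply: eq_bigr => k _; rewrite mxE.
by rewrite mul_mx_scalar scalerA /pair dotC mulrAC.
Qed.
End Dot.
Lemma inv_sum_even (T : eqType) (s : seq T) (f : T -> T) (h : T -> int) :
  uniq s -> {in s, forall x, f x \in s} -> {in s, forall x, f (f x) = x} ->
  {in s, forall x, (2 %| h x + h (f x))%Z} ->
  {in s, forall x, f x = x -> (2 %| h x)%Z} ->
  (2 %| \sum_(x <- s) h x)%Z.
Proof.
elim: {s}(size s).+1 {-2}s (ltnSn (size s)) => // N IH [|x s] szs.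
  by rewrite big_nil.
move=> /= /andP[xs us] fin finv fpar ffix.
have xin : x \in x :: s by rewrite inE eqxx.
have fxin := fin x xin.
case: (f x =P x) => fx.
  rewrite big_cons rpredD //; first exact: ffix.
  apply: IH => //.
  - move=> y ys; have yin : y \in x :: s by rewrite inE ys orbT.
    move: (fin y yin); rewrite inE => /orP[/eqP fyx|//].
    have : y = x by rewrite -(finv y yin) fyx fx.
    by move=> yx; rewrite -yx ys in xs.
  - by move=> y ys; apply: finv; rewrite inE ys orbT.
  - by move=> y ys; apply: fpar; rewrite inE ys orbT.
  - by move=> y ys; apply: ffix; rewrite inE ys orbT.
have fxs : f x \in s.
  by move: fxin; rewrite inE => /orP[/eqP//|//].
rewrite big_cons (perm_big _ (perm_to_rem fxs)) big_cons addrA.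
rewrite rpredD //; first exact: fpar.
have remP y : y \in rem (f x) s -> [/\ y \in s, y != f x & y != x].
  rewrite (mem_rem_uniq _ us) inE => /andP[-> ys]; split=> //.
  by apply/eqP => yx; rewrite -yx ys in xs.
apply: IH.
- rewrite size_rem //; move: szs; rewrite /= ltnS.
  exact: leq_ltn_trans (leq_pred _).
- exact: rem_uniq.
- move=> y /remP[ys yfx yx]; have yin : y \in x :: s by rewrite inE ys orbT.
  rewrite (mem_rem_uniq _ us) inE; apply/andP; split.
    by apply/eqP => /(congr1 f); rewrite finv // (finv x xin); apply/eqP.
  move: (fin y yin); rewrite inE => /orP[/eqP fyx|//].
  by case/eqP: yfx; rewrite -fyx finv.
- by move=> y /remP[ys _ _]; apply: finv; rewrite inE ys orbT.
- by move=> y /remP[ys _ _]; apply: fpar; rewrite inE ys orbT.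
- by move=> y /remP[ys _ _]; apply: ffix; rewrite inE ys orbT.
Qed.
Section Roots.
Variables (R : realType) (n : nat) (rs : rootSystem R n) (v : 'cV[R]_n).
Hypothesis vreg : forall a, a \in rs_roots rs -> dot a v != 0.
Local Notation roots := (rs_roots rs).

Lemma root_nz b : b \in roots -> b != 0.
Proof. by move=> bR; apply: contraNneq (roots_nz rs) => <-. Qed.

Lemma root_opp b : b \in roots -> - b \in roots.
Proof.
move=> bR; have := roots_refl bR bR.
by rewrite refl_mul pairaa ?root_nz // scaler_nat mulr2n opprD addrA subrr add0r.
Qed.

Lemma is_posN b : b \in roots -> is_pos v (- b) = ~~ is_pos v b.
Proof. by move=> bR; rewrite /is_pos dotNl oppr_gt0 -leNgt lt_neqAle vreg. Qed.

Lemma sgnabs_pos b : b \in roots -> sgnabs v b \in posroots rs v.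
Proof.
move=> bR; rewrite /sgnabs mem_filter; case: ifP => hp; first by rewrite hp.
by rewrite is_posN // hp root_opp.
Qed.

Lemma posrootsP b : b \in posroots rs v -> b \in roots /\ is_pos v b.
Proof. by rewrite mem_filter => /andP[]. Qed.

Lemma pair_int a b : a \in roots -> b \in roots ->
  pair b a = (Num.floor (pair b a))%:~R.
Proof. by move=> aR bR; case: (roots_cryst aR bR) => z ->; rewrite intrKfloor. Qed.

Lemma reflK (a b : 'cV[R]_n) : a != 0 -> refl a *m (refl a *m b) = b.
Proof.
move=> a0; rewrite !refl_mul pairDl pairNl pairZl pairaa //.
have -> : pair b a + - (pair b a * 2) = - pair b a.
  by rewrite mulr_natr mulr2n opprD addrA subrr add0r.
by rewrite scaleNr opprK subrK.
Qed.

Lemma pair_rho_int a : a \in posroots rs v ->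
  exists k : int, pair (rho rs v) a = k%:~R.
Proof.
move=> /posrootsP[aR apos].
have a0 := root_nz aR.
pose f b := sgnabs v (refl a *m b).
pose h b := Num.floor (pair b a).
have key : (2 %| \sum_(b <- posroots rs v) h b)%Z.
  apply: (@inv_sum_even _ _ f).
  - exact/filter_uniq/roots_uniq.
  - by move=> b /posrootsP[bR _]; apply/sgnabs_pos/roots_refl.
  - move=> b /posrootsP[bR bpos]; rewrite /f.
    have [E|E] : sgnabs v (refl a *m b) = refl a *m b \/
                 sgnabs v (refl a *m b) = - (refl a *m b).
      by rewrite /sgnabs; case: ifP; [left|right].
    + by rewrite E reflK // /sgnabs bpos.
    + by rewrite E mulmxN reflK // /sgnabs is_posN // bpos opprK.
  - move=> b /posrootsP[bR bpos]; rewrite /f /h.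
    have hb := pair_int aR bR.
    have pc : pair (refl a *m b) a = - pair b a.
      by rewrite refl_mul pairDl pairNl pairZl pairaa // mulr_natr mulr2n opprD addrA subrr add0r.
    have [E|E] : sgnabs v (refl a *m b) = refl a *m b \/
                 sgnabs v (refl a *m b) = - (refl a *m b).
      by rewrite /sgnabs; case: ifP; [left|right].
    + rewrite E pc hb -rmorphN /= !intrKfloor.
      by rewrite subrr dvdz0.
    + rewrite E pairNl pc opprK.
      by apply/dvdzP; exists (Num.floor (pair b a)); rewrite mulr_natr mulr2n.
  - move=> b /posrootsP[bR bpos]; rewrite /f /h.
    have [E|E] : sgnabs v (refl a *m b) = refl a *m b \/
                 sgnabs v (refl a *m b) = - (refl a *m b).
      by rewrite /sgnabs; case: ifP; [left|right].
    + rewrite E refl_mul => /eqP; rewrite subr_eq addrC -subr_eq subrr eq_sym.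
      rewrite scaler_eq0 (negbTE a0) orbF => /eqP ->.
      by rewrite (intrKfloor 0) dvdz0.
    + rewrite E refl_mul opprB => /eqP; rewrite subr_eq => /eqP pE.
      have bE : b = (pair b a / 2) *: a.
        rewrite mulrC -scalerA pE -[b + b]mulr2n -scaler_nat scalerA mulVf ?scale1r //.
        by rewrite pnatr_eq0.
      have := @roots_reduced _ _ rs a (pair b a / 2) aR; rewrite -bE => /(_ bR) [] E2.
      * have -> : pair b a = 2.
          by rewrite -[pair b a](@divfK _ 2) ?E2 ?mul1r // pnatr_eq0.
        by rewrite (intrKfloor 2).
      * have -> : pair b a = (-2)%:~R.
          by rewrite -[pair b a](@divfK _ 2) ?E2 ?mulN1r // pnatr_eq0.
        by rewrite intrKfloor.
case/dvdzP: key => q qE.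
exists q.
rewrite /rho pairZl pair_sum.
have -> : \sum_(b <- posroots rs v) pair b a = (\sum_(b <- posroots rs v) h b)%:~R.
  rewrite rmorph_sum /=; apply: eq_big_seq => b /posrootsP[bR _].
  exact: pair_int.
rewrite qE rmorphM /= mulrC -mulrA mulfV ?mulr1 //.
by rewrite (intr_eq0 R 2).
Qed.
End Roots.
Section Walks.
Variables (R : realType) (n : nat) (rs : rootSystem R n) (v : 'cV[R]_n).
Hypothesis vreg : forall a, a \in rs_roots rs -> dot a v != 0.
Local Notation L x := (Posz (len rs v x)).

Lemma edge_par x a y : qbg_edge rs v x a y -> (2 %| L y - L x - 1)%Z.
Proof.
case/and3P => aP _ /orP[/eqP -> | /eqP H].
  by rewrite -addn1 PoszD; set z := Posz (len rs v x); rewrite (_ : z + 1 - z - 1 = 0) ?dvdz0 //; ring.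
have [k kE] := pair_rho_int vreg aP.
rewrite kE in H.
have H2 : ((L y)%:~R : R) = (L x - 2 * k + 1)%:~R.
  by rewrite !rmorphD rmorphN rmorphM /= -!pmulrn H.
move/intr_inj: H2 => ->.
have -> : L x - 2 * k + 1 - L x - 1 = k * (- 2) by ring.
exact: dvdz_mull.
Qed.

Lemma walk_par x gs : qbg_walk rs v x gs ->
  (2 %| L (walk_end x gs) - L x - Posz (size gs))%Z.
Proof.
elim: gs x => [|g gs IH] x /=.
  by rewrite /walk_end /= subrr sub0r rpredN dvdz0.
case/andP => /edge_par e /IH w.
have -> : L (walk_end x (g :: gs)) - L x - Posz (size gs).+1 =
  (L (walk_end (x *m refl g) gs) - L (x *m refl g) - Posz (size gs)) +
  (L (x *m refl g) - L x - 1).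
  rewrite /walk_end /=; rewrite intS; ring.
exact: rpredD.
Qed.

Lemma walk_pos x gs : qbg_walk rs v x gs -> all (mem (posroots rs v)) gs.
Proof.
elim: gs x => [|g gs IH] x //= /andP[/and3P[gP _ _] /IH ->].
by rewrite andbT.
Qed.

Lemma seqs_lenP gs : all (mem (posroots rs v)) gs -> gs \in seqs_len rs v (size gs).
Proof.
elim: gs => [|g gs IH] /=; first by rewrite inE.
case/andP => gP /IH H; apply/allpairsP; exists (g, gs); split=> //.
Qed.

Lemma seqs_len_size k gs : gs \in seqs_len rs v k -> size gs = k.
Proof.
elim: k gs => [|k IH] gs /=; first by rewrite inE => /eqP ->.
by case/allpairsP => [[g t] [/= _ /IH <- ->]].
Qed.

Lemma walk_cat x s1 s2 :
  qbg_walk rs v x (s1 ++ s2) = qbg_walk rs v x s1 && qbg_walk rs v (walk_end x s1) s2.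
Proof. by elim: s1 x => [|g s1 IH] x //=; rewrite IH andbA. Qed.

Lemma walk_end_cat (x : 'M[R]_n) s1 s2 :
  walk_end x (s1 ++ s2) = walk_end (walk_end x s1) s2.
Proof. by rewrite /walk_end foldl_cat. Qed.

Lemma dist_par x gs : qbg_walk rs v x gs ->
  (2 %| Posz (qbg_dist rs v x (walk_end x gs)) - Posz (size gs))%Z.
Proof.
move=> W.
have Hr : reach_len rs v x (walk_end x gs) (size gs).
  apply/hasP; exists gs; last by rewrite W eqxx.
  exact/seqs_lenP/(walk_pos W).
rewrite /qbg_dist; case: excluded_middle_informative => [H|H]; last first.
  by case: H; exists (size gs).
case: ex_minnP => k /hasP[gs2 /seqs_len_size sz /andP[W2 /eqP E2]] _.
have h1 := walk_par W; have h2 := walk_par W2.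
rewrite E2 sz in h2.
have -> : Posz k - Posz (size gs) =
  (L (walk_end x gs) - L x - Posz (size gs)) - (L (walk_end x gs) - L x - Posz k) by ring.
exact: rpredB.
Qed.
End Walks.
Lemma foldl_map_gen (T1 T2 T3 : Type) (F : T1 -> T2 -> T1) (g : T3 -> T2) x s :
  foldl F x (map g s) = foldl (fun y j => F y (g j)) x s.
Proof. by elim: s x => //= j s IH x; rewrite IH. Qed.

Section AWalk.
Variables (R : realType) (n : nat) (rs : rootSystem R n) (v : 'cV[R]_n).
Hypothesis vreg : forall a, a \in rs_roots rs -> dot a v != 0.
Variables (ord : seq 'cV[R]_n) (lam : 'cV[R]_n) (w : 'M[R]_n) (A : seq nat).
Hypothesis Aw : adm_walk rs v ord lam w A.
Local Notation L x := (Posz (len rs v x)).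
Local Notation G := (map (fun j => sgnabs v (gam rs v ord lam j)) A).
Local Notation uu := (u rs v ord lam w A).

Lemma adm_walkE x B :
  adm_walk rs v ord lam x B = qbg_walk rs v x (map (fun j => sgnabs v (gam rs v ord lam j)) B).
Proof. by elim: B x => //= j B IH x; rewrite IH. Qed.

Lemma GW : qbg_walk rs v w G.
Proof. by rewrite -adm_walkE. Qed.

Lemma uE a : (a <= size A)%N -> uu a = walk_end w (take a G).
Proof.
case: a => [|a] ha; first by rewrite take0.
rewrite /u /us /= nth_scanl // -map_take /walk_end foldl_map_gen.
by [].
Qed.

Lemma W_take a : qbg_walk rs v w (take a G).
Proof. by move: GW; rewrite -{1}(cat_take_drop a G) walk_cat => /andP[]. Qed.

Lemma len_u a : (a <= size A)%N -> (2 %| L (uu a) - L w - Posz a)%Z.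
Proof.
move=> ha; rewrite uE //.
have := walk_par vreg (W_take a).
by rewrite size_take size_map; case: ltnP => // h; rewrite (@anti_leq a (size A)) ?ha.
Qed.

Lemma dist_u i j : (i <= j <= size A)%N ->
  (2 %| Posz (qbg_dist rs v (uu i) (uu j)) - Posz (j - i))%Z.
Proof.
case/andP => ij jp.
rewrite (uE (leq_trans ij jp)) (uE jp).
have E : take j G = take i G ++ take (j - i) (drop i G) by rewrite -takeD subnKC.
have := W_take j; rewrite E walk_cat => /andP[_ W].
rewrite walk_end_cat.
have := dist_par vreg W.
rewrite size_take size_drop size_map.
case: ltnP => // h.
by have -> : (j - i = size A - i)%N by apply/eqP; rewrite eqn_leq h leq_sub2r.
Qed.
End AWalk.
Section InvFacts.
Variables (R : realType) (n : nat) (rs : rootSystem R n) (v : 'cV[R]_n).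
Variables (ord : seq 'cV[R]_n) (lam : 'cV[R]_n).
Local Notation IL := (Inv_list rs v ord lam).

Lemma Inv_le_total : total (Inv_le v ord lam).
Proof.
move=> b b'; rewrite /Inv_le.
case: (ltgtP (dval lam b) (dval lam b')) => //= _.
exact: leq_total.
Qed.

Lemma IL_sorted : sorted <=%R (map (dval lam) IL).
Proof.
rewrite sorted_map; have := sort_sorted Inv_le_total
  [seq b <- Inv_cands rs lam | in_Inv v lam b].
apply: sub_sorted => b b' /orP[/ltW // | /andP[/eqP /= -> _]] /=.
by [].
Qed.

Lemma dd_mono i j : (i <= j < r_len rs v ord lam)%N ->
  dd rs v ord lam i <= dd rs v ord lam j.
Proof.
case/andP => ij jr.
have ir := leq_ltn_trans ij jr.
rewrite /dd /beta -!(nth_map (0,0) (dval lam (0,0))) //.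
apply: le_sorted_leq_nth; rewrite ?inE ?size_map //.
exact: IL_sorted.
Qed.

Lemma beta_Inv j : (j < r_len rs v ord lam)%N ->
  in_Inv v lam (beta rs v ord lam j) /\ exists k : nat, (beta rs v ord lam j).2 = Posz k.
Proof.
move=> jr; have := mem_nth (0, 0) jr.
rewrite -/(beta rs v ord lam j) mem_sort mem_filter => /andP[-> /allpairsP].
by case=> [[a k] [_ _ ->]]; split => //; exists k.
Qed.

Lemma dd_facts j : (j < r_len rs v ord lam)%N ->
  (dd rs v ord lam j <= 0 -> is_pos v (gam rs v ord lam j)) /\
  (1 <= dd rs v ord lam j -> ~~ is_pos v (gam rs v ord lam j)).
Proof.
move=> /beta_Inv [/andP[ap tn] [k kE]].
rewrite /dd /gam /dval.
move: ap tn; rewrite /aff_pos /tlam_neg kE /=.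
set p := pair lam (beta rs v ord lam j).1.
set g := (beta rs v ord lam j).1.
move=> ap tn.
have kge : 0 <= (Posz k)%:~R :> R by rewrite ler0n.
have pp : 0 < p.
  rewrite ltNge; apply/negP => p0.
  move: tn; rewrite ltNge subr_ge0 (le_trans p0 kge) /= => /andP[/eqP e np].
  have k0 : k = 0%N.
    have := subr0_eq e => ke.
    by apply/eqP; rewrite -(lern0 R) -[_%:R]/((Posz k)%:~R) ke.
  by move: ap; rewrite k0 ltxx /= (negbTE np).
split.
- move=> d0; move: d0; rewrite ler_pdivrMr // mul0r => kle.
  have k0 : k = 0%N by apply/eqP; rewrite -(lern0 R).
  by move: ap; rewrite k0 ltxx /=.
- move=> d1; move: d1; rewrite ler_pdivlMr // mul1r => pk.
  by move: tn; rewrite ltNge subr_ge0 pk /= => /andP[].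
Qed.
End InvFacts.
Lemma take_count_lt (R : realType) (T : eqType) (f : T -> R) (s : seq T) (c : R) :
  sorted <=%R (map f s) ->
  let k := count (fun d => d < c) (map f s) in
  (forall x, x \in take k s -> f x < c) /\ (forall x, x \in drop k s -> c <= f x).
Proof.
elim: s => [|x s IH] /=; first by split => y; rewrite in_nil.
move=> srt.
have [IH1 IH2] := IH (path_sorted srt).
case: (ltP (f x) c) => hx /=.
  rewrite add0n; split => y; last exact: IH2.
  by rewrite inE => /orP[/eqP -> | /IH1].
have allge : forall y, y \in s -> c <= f y.
  move=> y ys; apply: (le_trans hx).
  have := order_path_min (@le_trans _ R) srt => /allP; apply.
  exact: map_f.
have -> : count (fun d => d < c) (map f s) = 0%N.
  rewrite count_map; apply/eqP; rewrite -leqn0 leqNgt -has_count.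
  by apply/hasPn => y /allge; rewrite /preim /= ltNge => ->.
split => y /=; first by rewrite in_nil.
by rewrite inE => /orP[/eqP -> // | /allge].
Qed.

Lemma count_take_sub (s : seq bool) i j : (i <= j)%N ->
  count id (take (j - i) (drop i s)) = (count id (take j s) - count id (take i s))%N.
Proof. by move=> ij; rewrite -{2}(subnKC ij) takeD count_cat addKn. Qed.

Lemma count_take_mono (s : seq bool) i j : (i <= j)%N ->
  (count id (take i s) <= count id (take j s))%N.
Proof. by move=> ij; rewrite -(subnKC ij) takeD count_cat leq_addr. Qed.

Lemma Posz_sum (I : Type) (r : seq I) (P : pred I) (F : I -> nat) :
  Posz (\sum_(i <- r | P i) F i)%N = \sum_(i <- r | P i) Posz (F i).
Proof. exact: (big_morph Posz PoszD). Qed.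

Lemma sorted_ltn_map (R : realType) (f : nat -> R) r (A : seq nat) :
  (forall i j, (i <= j < r)%N -> f i <= f j) ->
  sorted ltn A -> all (fun j => j < r)%N A -> sorted <=%R (map f A).
Proof.
move=> fm; elim: A => //= j A IH.
case: A IH => //= j2 A IH /andP[jj2 pA] /and3P[jr j2r aA].
rewrite fm ?(ltnW jj2) ?j2r //=.
by apply: IH => //=; rewrite j2r.
Qed.
Lemma size_take_leq (T : Type) k (s : seq T) : (size (take k s) <= size s)%N.
Proof. by rewrite size_take; case: ltnP => // /ltnW. Qed.

Theorem corollary5p9 (R : realType) (n : nat) (rs : rootSystem R n)
  (v : 'cV[R]_n) (v_regular : forall a, a \in rs_roots rs -> dot a v != 0)
  (lam : 'cV[R]_n) (lam_weight : is_weight rs lam)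
  (ord : seq 'cV[R]_n) (ord_RO : RO_lambda rs v ord lam)
  (w : 'M[R]_n) (w_in_W : inW rs w)
  (A : seq nat) (A_adm : admissible rs v ord lam w A) :
  (Posz (n_A rs v ord lam A)
     = Posz (nega rs v (Xi rs v ord lam w A))
       + Posz (len rs v (end_A rs v ord lam w A))
       - Posz (len rs v (iota_eta (Xi rs v ord lam w A))) %[mod 2])%Z.
Proof.
case/and3P: (A_adm) => Asort Ar Aw.
pose negf j := ~~ is_pos v (gam rs v ord lam j).
pose ddf := dd rs v ord lam.
pose csA := cs rs v ord lam A.
pose dsA := ds rs v ord lam A.
pose t := t_A rs v ord lam A.
pose ccf := cc rs v ord lam A.
pose mmf := mm rs v ord lam A.
pose nnf := nn rs v ord lam A.
pose nf := negflags rs v ord lam A.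
pose uu := u rs v ord lam w A.
pose p := size A.
pose Tc k := count id (take k nf).
have TcE k : Tc k = count negf (take k A) by rewrite /Tc /nf /negflags -map_take count_map.
have szds : size dsA = p by rewrite size_map.
have mm_le a : (mmf a <= p)%N by rewrite /mmf /mm -szds count_size.
have nnE a : nnf a = (mmf a + count id (take (mmf a.+1 - mmf a) (drop (mmf a) nf)))%N by [].
have nn_le a : (mmf a <= nnf a <= p)%N.
  rewrite nnE leq_addr /=.
  rewrite -(subnKC (mm_le a)) leq_add2l.
  apply: leq_trans (count_size _ _) _; apply: leq_trans (size_take_leq _ _) _.
  by rewrite size_drop size_map.
have dsort : sorted <=%R (map ddf A).
  exact: (sorted_ltn_map (@dd_mono _ _ rs v ord lam)).
have dfacts j : j \in A -> (ddf j <= 0 -> ~~ negf j) /\ (1 <= ddf j -> negf j).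
  move=> jA; have := dd_facts ((allP Ar) j jA).
  by rewrite /negf negbK.
have csP x : (x \in csA) = [&& x \in dsA, 0 < x & x < 1].
  by rewrite mem_sort mem_undup mem_filter andbC andbA.
have cssort : sorted <=%R csA by apply: sort_sorted; exact: le_total.
have tE : t = (size csA).+1 by [].
have cc1 d : d \in dsA -> d < ccf 1 -> d <= 0.
  move=> dds dlt; rewrite leNgt; apply/negP => dpos.
  move: dlt; rewrite /ccf /cc -/t tE ltnS /= -/csA.
  case E: csA => [|h cs'] /=.
    move=> d1; have : d \in csA by rewrite csP dds dpos d1.
    by rewrite E.
  move=> dh.
  have hin : h \in csA by rewrite E mem_head.
  have h1 : h < 1 by move: hin; rewrite csP => /and3P[].
  have : d \in csA by rewrite csP dds dpos (lt_trans dh h1).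
  rewrite E inE => /orP[/eqP dE|dcs]; first by rewrite dE ltxx in dh.
  have := cssort; rewrite E /= => /(order_path_min (@le_trans _ R)) /allP /(_ d dcs).
  by rewrite leNgt dh.
have ccT : ccf t = 1 by rewrite /ccf /cc -/t tE ltnn.
have mono a : (1 <= a)%N -> (a < t)%N -> (mmf a <= mmf a.+1)%N.
  move=> a1 at'; rewrite /mmf /mm; apply: sub_count => d /= hd; apply: lt_le_trans hd _.
  rewrite /ccf /cc -/t.
  have -> : (a == 0%N) = false by case: (a) a1.
  rewrite at' /=.
  have asz : (a.-1 < size csA)%N by move: at'; rewrite tE; case: a a1.
  case: ltnP => h.
    apply: (le_sorted_leq_nth 0 cssort); rewrite ?inE ?leq_pred //.
  have : nth 0 csA a.-1 \in csA by exact: mem_nth.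
  by rewrite csP => /and3P[_ _ /ltW].
have Tc1 : Tc (mmf 1) = 0%N.
  rewrite TcE; apply/eqP; rewrite -leqn0 leqNgt -has_count; apply/hasPn => j jin.
  have [H1 _] := take_count_lt (ccf 1) dsort.
  have jA : j \in A by exact: mem_take jin.
  have := H1 j jin => /(cc1 (ddf j) (map_f _ jA)).
  by case: (dfacts j jA) => H _ /H.
have Tdrop : count negf (drop (mmf t) A) = (p - mmf t)%N.
  rewrite -size_drop; apply/eqP; rewrite -all_count; apply/allP => j jin.
  have [_ H2] := take_count_lt (ccf t) dsort.
  have jA : j \in A by exact: mem_drop jin.
  have := H2 j jin; rewrite ccT.
  by case: (dfacts j jA) => _ H /H.
have nAE : n_A rs v ord lam A = (Tc (mmf t) + (p - mmf t))%N.
  by rewrite TcE -Tdrop -count_cat cat_take_drop.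
have ET : end_A rs v ord lam w A = uu p.
  by rewrite /end_A /uu /u -nth_last /us /= size_scanl.
have tpos : (0 < t)%N by rewrite tE.
have EI : iota_eta (Xi rs v ord lam w A) = uu (mmf t).
  by rewrite /iota_eta /Xi /= subn1.
have Nega : nega rs v (Xi rs v ord lam w A) =
    (\sum_(1 <= k < t) qbg_dist rs v (uu (mmf (t - k))) (uu (nnf (t - k))))%N.
  have xsE : xs (Xi rs v ord lam w A) = [seq uu (mmf (t.+1 - i)%N) | i <- iota 1 t] by [].
  have ysE : ys (Xi rs v ord lam w A) = [seq uu (nnf (t - i)%N) | i <- iota 1 t.-1] by [].
  rewrite /nega xsE ysE size_map size_iota; apply: eq_big_nat => k /andP[k1 kt].
  rewrite (nth_map 0%N) ?size_iota // nth_iota //.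
  rewrite (nth_map 0%N) ?size_iota; last by lia.
  rewrite nth_iota; last by lia.
  have -> : (t.+1 - (1 + k) = t - k)%N by lia.
  have -> : (t - (1 + k.-1) = t - k)%N by lia.
  by [].
have S1 : (\sum_(1 <= k < t) (nnf (t - k) - mmf (t - k)))%N =
          (\sum_(1 <= k < t) (nnf k - mmf k))%N.
  rewrite (big_nat_rev _ _ 1 t) /=; apply: eq_big_nat => k /andP[k1 kt].
  by have -> : (t - (1 + t - k.+1) = k)%N by lia.
have S2 : (\sum_(1 <= k < t) (nnf k - mmf k))%N = Tc (mmf t).
  transitivity (\sum_(1 <= k < t) (Tc (mmf k.+1) - Tc (mmf k)))%N; last first.
    rewrite (telescope_sumn_in (f := fun k => Tc (mmf k))) ?Tc1 ?subn0 //.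
    by move=> i /andP[i1 it]; apply: count_take_mono; apply: mono.
  apply: eq_big_nat => k /andP[k1 kt].
  by rewrite nnE addKn count_take_sub //; apply: mono.
have E1 : (2 %| Posz (nega rs v (Xi rs v ord lam w A)) - Posz (Tc (mmf t)))%Z.
  rewrite Nega -S2 -S1 !Posz_sum -sumrB.
  apply: rpred_sum => k _.
  exact: (dist_u v_regular Aw (nn_le (t - k)%N)).
have E2 := len_u v_regular Aw (leqnn p).
have E3 := len_u v_regular Aw (mm_le t).
apply/eqP; rewrite eqz_mod_dvd ET EI nAE.
have mtp := mm_le t.
set X1 := Posz (nega _ _ _) in E1 *.
set X2 := Posz (len rs v (uu p)) in E2 *.
set X3 := Posz (len rs v (uu (mmf t))) in E3 *.
set X4 := Posz (len rs v w) in E2 E3 *.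
have -> : Posz (Tc (mmf t) + (p - mmf t)) - (X1 + X2 - X3) =
  - (X1 - Posz (Tc (mmf t))) - (X2 - X4 - Posz p) + (X3 - X4 - Posz (mmf t)) by lia.
apply: rpredD; last exact: E3.
apply: rpredB; last exact: E2.
by rewrite rpredN.
Qed.
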